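(* Let $n=n_1+\dots+n_k$ be a partition into positive integers, let $L=U(n_1)\times\cdots\times U(n_k)$ be the natural block-diagonal subgroup of $G=U(n)$, and let $G'=O(n)$. Let $J=\mathrm{diag}(J_1,\dots,J_k)\in M(n,\mathbb{R})$ be block diagonal with $J_i\in M(n_i,\mathbb{R})$, and let $G_J:=\{g\in G:gJ=Jg\}$. Suppose there exist a skew-Hermitian matrix $X\in\mathfrak{u}(n)$ and a sequence $i_0,i_1,\dots,i_l\in\{1,\dots,k\}$ ($l\ge 2$) with $i_0=i_l$ and $i_{a-1}\ne i_a$ ($a=1,\dots,l$) such that $\det(\lambda I_{n_{i_0}}-A_{i_0\cdots i_l}([X,J]))\notin\mathbb{R}[\lambda]$. Then the multiplication map $L\times G'\times G_J\to G$ is not surjective.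
   Context: For $P\in M(n,\mathbb{C})$ written in block form $P=(P_{ij})_{1\le i,j\le k}$ with $P_{ij}\in M(n_i,n_j;\mathbb{C})$, set $\widetilde P_{ij}:=P_{ij}$ if $i<j$ and $\widetilde P_{ij}:=P_{ji}^*$ (conjugate transpose) if $i>j$, and $A_{i_0\cdots i_l}(P):=\widetilde P_{i_0i_1}\widetilde P_{i_1i_2}\cdots\widetilde P_{i_{l-1}i_l}\in M(n_{i_0},\mathbb{C})$. $[X,J]=XJ-JX$; $I_m$ is the identity matrix. *)

(* Defs.v *)
From HB Require Import structures.
From mathcomp Require Import all_boot all_order all_algebra.
From mathcomp Require Import complex.
From mathcomp Require Import reals.
Set Implicit Arguments. Unset Strict Implicit. Unset Printing Implicit Defensive.
Import Order.TTheory GRing.Theory Num.Theory.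
Local Open Scope ring_scope.

(* Complex numbers are R[i] for R : realType (any realType is isomorphic to the reals). *)

Definition ctmx (C : numClosedFieldType) (m n : nat) (A : 'M[C]_(m, n)) : 'M[C]_(n, m) :=
  map_mx Num.conj (A^T).

Definition unitary_mx (C : numClosedFieldType) (n : nat) (g : 'M[C]_n) : Prop :=
  g *m ctmx g = 1%:M.

Definition skew_hermitian (C : numClosedFieldType) (n : nat) (X : 'M[C]_n) : Prop :=
  ctmx X = - X.

Definition commmx (C : pzRingType) (n : nat) (X J : 'M[C]_n) : 'M[C]_n :=
  X *m J - J *m X.

Section Blocks.
Variables (C : numClosedFieldType) (k : nat) (ns : 'I_k -> nat).
Local Notation N := (\sum_(i < k) ns i)%N.

(* \tilde P_{ij} : P_{ij} if i < j, (P_{ji})^* if i > j (and P_{ii} when i = j, unused) *)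
Definition Ptilde (P : 'M[C]_N) (i j : 'I_k) : 'M[C]_(ns i, ns j) :=
  if (j < i)%N then ctmx (submxblock P j i) else submxblock P i j.

Fixpoint Aprod (P : 'M[C]_N) (i : 'I_k) (s : seq 'I_k) : 'M[C]_(ns i, ns (last i s)) :=
  match s with
  | [::] => 1%:M
  | j :: s' => Ptilde P i j *m Aprod P j s'
  end.

(* A_{i0 i1 ... i(l-1) i0}(P) for the closed sequence i0, s, i0 (with s = i1..i(l-1)) *)
Definition Acyc (P : 'M[C]_N) (i0 : 'I_k) (s : seq 'I_k) : 'M[C]_(ns i0) :=
  Aprod P i0 s *m Ptilde P (last i0 s) i0.

End Blocks.

(* Main.v *)
Require Import Defs.
From HB Require Import structures.
From mathcomp Require Import all_boot all_order all_algebra.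
From mathcomp Require Import complex.
From mathcomp Require Import reals.
From mathcomp Require Import ring.
Set Implicit Arguments. Unset Strict Implicit. Unset Printing Implicit Defensive.
Import Order.TTheory GRing.Theory Num.Theory.
Local Open Scope ring_scope.
Section BlockMul.
Variables (T : pzRingType) (k : nat) (ns : 'I_k -> nat).
Local Notation N := (\sum_(i < k) ns i)%N.

Lemma submxblockM (A B : 'M[T]_N) i j :
  submxblock (A *m B) i j = \sum_l (submxblock A i l *m submxblock B l j).
Proof.
have := mul_mxblock (submxblock A) (submxblock B).
by rewrite !submxblockK => ->; rewrite mxblockK.
Qed.
End BlockMul.

Section GenA.
Variables (T : pzRingType) (f : T -> T) (k : nat) (ns : 'I_k -> nat).
Local Notation N := (\sum_(i < k) ns i)%N.
Definition ctf m n (A : 'M[T]_(m, n)) : 'M[T]_(n, m) := map_mx f A^T.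
Definition PtG (P : 'M[T]_N) (i j : 'I_k) : 'M[T]_(ns i, ns j) :=
  if (j < i)%N then ctf (submxblock P j i) else submxblock P i j.
Fixpoint AprodG (P : 'M[T]_N) (i : 'I_k) (s : seq 'I_k) : 'M[T]_(ns i, ns (last i s)) :=
  match s with
  | [::] => 1%:M
  | j :: s' => PtG P i j *m AprodG P j s'
  end.
Definition AcycG (P : 'M[T]_N) (i0 : 'I_k) (s : seq 'I_k) : 'M[T]_(ns i0) :=
  AprodG P i0 s *m PtG P (last i0 s) i0.
End GenA.

Lemma Acyc_G (C : numClosedFieldType) k (ns : 'I_k -> nat) (P : 'M[C]_(\sum_(i < k) ns i)) i0 s :
  Acyc P i0 s = AcycG Num.conj P i0 s.
Proof.
by [].
Qed.

Lemma map_AcycG (T T' : nzRingType) (phi : {rmorphism T -> T'}) (f : T -> T) (f' : T' -> T')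
  (Hf : forall x, phi (f x) = f' (phi x)) k (ns : 'I_k -> nat)
  (P : 'M[T]_(\sum_(i < k) ns i)) i0 s :
  map_mx phi (AcycG f P i0 s) = AcycG f' (map_mx phi P) i0 s.
Proof.
have HP : forall i j, map_mx phi (PtG f P i j) = PtG f' (map_mx phi P) i j.
  by move=> i j; rewrite /PtG; case: ifP => _; apply/matrixP => a b; rewrite !mxE ?Hf.
rewrite /AcycG map_mxM HP; congr (_ *m _).
elim: s i0 => [|j s IH] i0 /=; first by rewrite map_mx1.
by rewrite map_mxM HP IH.
Qed.

Section Scale.
Variables (T : comNzRingType) (f : {rmorphism T -> T}) (k : nat) (ns : 'I_k -> nat).
Local Notation N := (\sum_(i < k) ns i)%N.
Variables (c : T) (Hc : f c = c) (P P' : 'M[T]_N)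
  (H : forall a b, a != b -> submxblock P a b = c *: submxblock P' a b).

Lemma PtG_scale i j : i != j -> PtG f P i j = c *: PtG f P' i j.
Proof.
move=> ij; rewrite /PtG; case: ifP => _; last by rewrite H.
by rewrite H 1?eq_sym //; apply/matrixP => a b; rewrite !mxE rmorphM Hc.
Qed.

Lemma AprodG_scale i s : path (fun a b : 'I_k => a != b) i s ->
  AprodG f P i s = c ^+ size s *: AprodG f P' i s.
Proof.
elim: s i => [|j s IH] i /=; first by rewrite scale1r.
case/andP => ij /IH ->; rewrite PtG_scale // -scalemxAl -scalemxAr scalerA exprS.
by [].
Qed.

Lemma AcycG_scale i0 s : path (fun a b : 'I_k => a != b) i0 (rcons s i0) ->
  AcycG f P i0 s = c ^+ (size s).+1 *: AcycG f P' i0 s.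
Proof.
rewrite rcons_path => /andP [Hp Hl].
rewrite /AcycG AprodG_scale // PtG_scale // -scalemxAl -scalemxAr scalerA exprSr.
by [].
Qed.
End Scale.
Lemma char_poly_scale (T : idomainType) m (M : 'M[T]_m) c j :
  c != 0 -> (j <= m)%N -> (char_poly (c *: M))`_j = c ^+ (m - j) * (char_poly M)`_j.
Proof.
move=> c0 jm.
have key : char_poly (c *: M) \Po (c *: 'X) = c%:P ^+ m * char_poly M.
  rewrite /char_poly -det_map_mx -detZ; congr (\det _).
  apply/matrixP => a b; rewrite !mxE.
  case: (a == b); rewrite /= ?mulr1n ?mulr0n.
    rewrite rmorphB /= comp_polyX comp_polyC -mul_polyC polyCM; ring.
  by rewrite !sub0r rmorphN /= comp_polyC polyCM mulrN.
move: (congr1 (fun p : {poly T} => p`_j) key).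
rewrite /= coef_comp_poly -rmorphXn coefCM.
have jS : (j < size (char_poly (c *: M)))%N by rewrite size_char_poly ltnS.
rewrite (bigD1 (Ordinal jS)) //= big1 ?addr0; last first.
  move=> i /= ij; rewrite exprZn coefZ coefXn.
  have /negbTE-> : j != i by apply: contra ij => /eqP ji; apply/eqP/val_inj.
  by rewrite !mulr0.
rewrite exprZn coefZ coefXn eqxx mulr1 => E.
apply: (mulfI (expf_neq0 j c0)); rewrite mulrA -exprD subnKC // -E; ring.
Qed.

Lemma char_poly_conj (T : comNzRingType) m (U V M : 'M[T]_m) :
  V *m U = 1%:M -> char_poly (U *m M *m V) = char_poly M.
Proof.
move=> VU; have UV := mulmx1C VU.
have E : char_poly_mx (U *m M *m V) =
   map_mx polyC U *m char_poly_mx M *m map_mx polyC V.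
  rewrite /char_poly_mx mulmxBr mulmxBl -!map_mxM; congr (_ - _).
  by rewrite scalar_mxC -mulmxA -map_mxM UV map_mx1 mulmx1.
rewrite /char_poly E !det_mulmx mulrC mulrA -det_mulmx -map_mxM VU map_mx1 det1.
by rewrite mul1r.
Qed.

Lemma char_poly_real (R : realType) m (M : 'M[R[i]]_m) :
  M \is a mxOver Num.real -> char_poly M \is a polyOver Num.real.
Proof.
move=> /mxOverP HM.
have -> : M = map_mx (real_complex R) (map_mx (@complex.Re R) M).
  by apply/matrixP => a b; rewrite !mxE RRe_real.
rewrite -map_char_poly; apply/polyOverP => i; rewrite coef_map /=.
by apply/complex_realP; eexists.
Qed.
Section Conj.
Variables (C : numClosedFieldType) (k : nat) (ns : 'I_k -> nat).
Local Notation N := (\sum_(i < k) ns i)%N.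

Lemma ctmxM m n p (A : 'M[C]_(m, n)) (B : 'M[C]_(n, p)) :
  ctmx (A *m B) = ctmx B *m ctmx A.
Proof. by rewrite /ctmx trmx_mul map_mxM. Qed.

Lemma ctmxK m n (A : 'M[C]_(m, n)) : ctmx (ctmx A) = A.
Proof. by apply/matrixP => a b; rewrite !mxE conjCK. Qed.

Lemma ctmx1 m : ctmx (1%:M : 'M[C]_m) = 1%:M.
Proof. by rewrite /ctmx trmx1 map_mx1. Qed.

Lemma submxblock_ctmx (A : 'M[C]_N) i j :
  submxblock (ctmx A) i j = ctmx (submxblock A j i).
Proof. by apply/matrixP => a b; rewrite !mxE. Qed.

Lemma submxblock1 i : submxblock (1%:M : 'M[C]_N) i i = 1%:M.
Proof. by rewrite -(mxdiagZ (p_ := ns) 1) submxblock_diag. Qed.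

Variables (l : 'M[C]_N) (Hl : l *m ctmx l = 1%:M)
  (Hoff : forall i j, i != j -> submxblock l i j = 0).
Local Notation d i := (submxblock l i i).

Lemma blk_unit i : d i *m ctmx (d i) = 1%:M /\ ctmx (d i) *m d i = 1%:M.
Proof.
have Hl' := mulmx1C Hl.
have E : forall (A : 'M[C]_N), submxblock (l *m A) i i = d i *m submxblock A i i.
  move=> A; rewrite submxblockM (bigD1 i) //= big1 ?addr0 // => x xi.
  by rewrite Hoff 1?eq_sym // mul0mx.
have E' : forall (A : 'M[C]_N), submxblock (A *m l) i i = submxblock A i i *m d i.
  move=> A; rewrite submxblockM (bigD1 i) //= big1 ?addr0 // => x xi.
  by rewrite Hoff // mulmx0.
split.
  by rewrite -submxblock_ctmx -E Hl submxblock1.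
by rewrite -submxblock_ctmx -E' Hl' submxblock1.
Qed.

Lemma blk_conj (Q : 'M[C]_N) i j :
  submxblock (l *m Q *m ctmx l) i j = d i *m submxblock Q i j *m ctmx (d j).
Proof.
have E1 : forall (A : 'M[C]_N), submxblock (A *m ctmx l) i j = submxblock A i j *m ctmx (d j).
  move=> A; rewrite submxblockM (bigD1 j) //= submxblock_ctmx.
  rewrite big1 ?addr0 // => x xj.
  have ct0 : forall m n, ctmx (0 : 'M[C]_(m, n)) = 0.
    by move=> m n; apply/matrixP=> a b; rewrite !mxE rmorph0.
  by rewrite submxblock_ctmx Hoff 1?eq_sym // ct0 mulmx0.
have E2 : forall (A : 'M[C]_N), submxblock (l *m A) i j = d i *m submxblock A i j.
  move=> A; rewrite submxblockM (bigD1 i) //=.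
  rewrite big1 ?addr0 // => x xi.
  by rewrite Hoff 1?eq_sym // mul0mx.
by rewrite E1 E2.
Qed.

Lemma PtG_conj (Q : 'M[C]_N) i j :
  PtG Num.conj (l *m Q *m ctmx l) i j = d i *m PtG Num.conj Q i j *m ctmx (d j).
Proof.
rewrite /PtG; case: ifP => _; last by rewrite blk_conj.
change (ctmx (submxblock (l *m Q *m ctmx l) j i)
  = d i *m ctmx (submxblock Q j i) *m ctmx (d j)).
by rewrite blk_conj !ctmxM ctmxK mulmxA.
Qed.

Lemma AprodG_conj (Q : 'M[C]_N) i s :
  AprodG Num.conj (l *m Q *m ctmx l) i s
  = d i *m AprodG Num.conj Q i s *m ctmx (d (last i s)).
Proof.
elim: s i => [|j s IH] i /=; first by rewrite mulmx1 (blk_unit i).1.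
rewrite IH PtG_conj !mulmxA; congr (_ *m _).
by rewrite -!mulmxA (mulmxA (ctmx (d j))) (blk_unit j).2 mul1mx.
Qed.

Lemma AcycG_conj (Q : 'M[C]_N) i s :
  AcycG Num.conj (l *m Q *m ctmx l) i s
  = d i *m AcycG Num.conj Q i s *m ctmx (d i).
Proof.
rewrite /AcycG AprodG_conj PtG_conj !mulmxA; congr (_ *m _).
by rewrite -!mulmxA (mulmxA (ctmx _)) (blk_unit _).2 mul1mx.
Qed.
End Conj.
Section RealA.
Variables (C : numClosedFieldType) (k : nat) (ns : 'I_k -> nat).
Local Notation N := (\sum_(i < k) ns i)%N.

Lemma PtG_real (Q : 'M[C]_N) i j : Q \is a mxOver Num.real ->
  PtG Num.conj Q i j \is a mxOver Num.real.
Proof.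
move=> /mxOverP HQ; apply/mxOverP => a b; rewrite /PtG; case: ifP => _; rewrite !mxE.
  by rewrite conj_Creal.
by [].
Qed.

Lemma AcycG_real (Q : 'M[C]_N) i s : Q \is a mxOver Num.real ->
  AcycG Num.conj Q i s \is a mxOver Num.real.
Proof.
move=> HQ; rewrite /AcycG; apply: mxOverM; last exact: PtG_real.
elim: s i => [|j s IH] i /=; first by apply: mxOver_scalar; rewrite ?rpred0 ?rpred1.
by apply: mxOverM; [exact: PtG_real | exact: IH].
Qed.
End RealA.

Lemma decomp_real (R : realType) k (ns : 'I_k -> nat)
  (l Q : 'M[R[i]]_(\sum_(i < k) ns i)) i0 s :
  l *m ctmx l = 1%:M -> (forall i j, i != j -> submxblock l i j = 0) ->
  Q \is a mxOver Num.real ->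
  char_poly (AcycG Num.conj (l *m Q *m ctmx l) i0 s) \is a polyOver Num.real.
Proof.
move=> Hl Hoff HQ; rewrite AcycG_conj //.
rewrite char_poly_conj; last exact: (blk_unit Hl Hoff i0).2.
by apply: char_poly_real; apply: AcycG_real.
Qed.
Section CoefMx.
Variable (C : comNzRingType).
Definition c1f (p : {poly C}) := p`_1.

Lemma ev0E (p : {poly C}) : horner_eval 0 p = p`_0.
Proof. by rewrite /horner_eval horner_coef0. Qed.

Lemma c1M m n p (A : 'M[{poly C}]_(m, n)) (B : 'M_(n, p)) :
  map_mx c1f (A *m B) = map_mx (horner_eval 0) A *m map_mx c1f B
                        + map_mx c1f A *m map_mx (horner_eval 0) B.
Proof.
apply/matrixP => a b; rewrite !mxE /c1f coef_sum -big_split; apply: eq_bigr => x _.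
by rewrite coefM big_ord_recr big_ord1 /= !mxE !ev0E.
Qed.

Lemma c1D m n (A B : 'M[{poly C}]_(m, n)) :
  map_mx c1f (A + B) = map_mx c1f A + map_mx c1f B.
Proof. by apply/matrixP => a b; rewrite !mxE /c1f coefD. Qed.

Lemma c1B m n (A B : 'M[{poly C}]_(m, n)) :
  map_mx c1f (A - B) = map_mx c1f A - map_mx c1f B.
Proof. by apply/matrixP => a b; rewrite !mxE /c1f coefB. Qed.

Lemma c1scalar m (x : {poly C}) : map_mx c1f (x%:M : 'M_m) = (x`_1)%:M.
Proof. by apply/matrixP => a b; rewrite !mxE /c1f coefMn. Qed.

Lemma c1X m n (A : 'M[C]_(m, n)) :
  map_mx c1f ('X *: map_mx polyC A) = A.
Proof. by apply/matrixP => a b; rewrite !mxE /c1f coefXM coefC. Qed.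

Lemma ev0X m n (A : 'M[C]_(m, n)) :
  map_mx (horner_eval 0) ('X *: map_mx polyC A) = 0.
Proof. by apply/matrixP => a b; rewrite !mxE ev0E coefXM coefC. Qed.

Lemma c1C m n (A : 'M[C]_(m, n)) : map_mx c1f (map_mx polyC A) = 0.
Proof. by apply/matrixP => a b; rewrite !mxE /c1f coefC. Qed.

Lemma ev0C m n (A : 'M[C]_(m, n)) : map_mx (horner_eval 0) (map_mx polyC A) = A.
Proof. by apply/matrixP => a b; rewrite !mxE ev0E coefC. Qed.

Lemma evtC (t : C) m n (A : 'M[C]_(m, n)) : map_mx (horner_eval t) (map_mx polyC A) = A.
Proof. by apply/matrixP => a b; rewrite !mxE /horner_eval hornerC. Qed.

Lemma c1_1 m : map_mx c1f (1%:M : 'M[{poly C}]_m) = 0.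
Proof. by apply/matrixP => a b; rewrite !mxE /c1f coefMn coef1 mul0rn. Qed.

Lemma ev0_1 m : map_mx (horner_eval 0) (1%:M : 'M[{poly C}]_m) = 1%:M.
Proof. exact: map_mx1. Qed.
End CoefMx.
Section Main.
Variables (R : realType) (k : nat) (ns : 'I_k -> nat) (Js : forall i : 'I_k, 'M[R]_(ns i))
  (X : 'M[R[i]]_(\sum_(i < k) ns i)).
Local Notation N := (\sum_(i < k) ns i)%N.
Local Notation C := (R[i]).
Local Notation ev0 := (horner_eval (0 : C)).

Definition Jc : 'M[C]_N := map_mx (real_complex R) (\mxdiag_(i < k) Js i).
Definition aS : 'M[{poly C}]_N := 1%:M - 'X *: map_mx polyC X.
Definition bS : 'M[{poly C}]_N := 1%:M + 'X *: map_mx polyC X.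
Definition NS : 'M[{poly C}]_N :=
  bS *m \adj aS *m map_mx polyC Jc *m \adj bS *m aS.
Definition KS : 'M[{poly C}]_N := map_mx (drop_poly 1) NS.

Lemma ev0_a : map_mx ev0 aS = 1%:M.
Proof. by rewrite /aS map_mxB map_mx1 ev0X subr0. Qed.
Lemma ev0_b : map_mx ev0 bS = 1%:M.
Proof. by rewrite /bS map_mxD map_mx1 ev0X addr0. Qed.
Lemma c1_a : map_mx (@c1f C) aS = - X.
Proof. by rewrite /aS c1B c1_1 c1X sub0r. Qed.
Lemma c1_b : map_mx (@c1f C) bS = X.
Proof. by rewrite /bS c1D c1_1 c1X add0r. Qed.

Lemma ev0_adj (M : 'M[{poly C}]_N) : map_mx ev0 M = 1%:M -> map_mx ev0 (\adj M) = 1%:M.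
Proof. by move=> H; rewrite map_mx_adj H adj1. Qed.

Lemma c1_adj (M : 'M[{poly C}]_N) : map_mx ev0 M = 1%:M ->
  map_mx (@c1f C) (\adj M) = ((\det M)`_1)%:M - map_mx (@c1f C) M.
Proof.
move=> H; have := congr1 (map_mx (@c1f C)) (mul_mx_adj M).
rewrite c1M c1scalar H ev0_adj // mul1mx mulmx1 => <-.
by rewrite addrK.
Qed.

Lemma c1_NS : map_mx (@c1f C) NS =
  2%:R *: (X *m Jc - Jc *m X) + ((\det aS)`_1 + (\det bS)`_1) *: Jc.
Proof.
rewrite /NS !c1M !map_mxM ev0_a ev0_b !ev0_adj ?ev0_a ?ev0_b // ev0C.
rewrite !c1_adj ?ev0_a ?ev0_b // c1_a c1_b c1C.
rewrite ?mul1mx ?mulmx1 ?mulmx0 ?mul0mx ?add0r ?addr0.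
rewrite !(mulmxN, mulNmx, mulmxBr, mulmxBl, mulmxDl, mulmxDr, mul_scalar_mx, mul_mx_scalar).
move: (X *m Jc) (Jc *m X) (Jc) => XJ JX J.
apply/matrixP => a b; rewrite !mxE; ring.
Qed.

Lemma Jc_off a b : a != b -> submxblock Jc a b = 0.
Proof.
move=> ab; rewrite /Jc /submxblock -map_mxsub -/(submxblock _ a b) mxblockK.
by rewrite (negbTE ab) map_mx0.
Qed.

Lemma Jc_off_entry a b x y : a != b ->
  Jc (tagnat.Rank a x) (tagnat.Rank b y) = 0.
Proof.
move=> ab; have := congr1 (fun M : 'M[C]_(ns a, ns b) => M x y) (Jc_off ab).
by rewrite /= !mxE.
Qed.

Lemma ev0_NS : map_mx ev0 NS = Jc.
Proof.
rewrite /NS !map_mxM ev0_a ev0_b !ev0_adj ?ev0_a ?ev0_b // ev0C.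
by rewrite ?mul1mx ?mulmx1.
Qed.

Lemma drop_off (M : 'M[{poly C}]_N) a b :
  (forall x y, (M (tagnat.Rank a x) (tagnat.Rank b y))`_0 = 0) ->
  submxblock M a b = 'X *: submxblock (map_mx (drop_poly 1) M) a b.
Proof.
move=> H; apply/matrixP => x y; rewrite !mxE.
move: (H x y); move: (M _ _) => p h0; apply/polyP => i; rewrite coefXM coef_drop_poly.
by case: i => [|i] /=; rewrite ?h0 // addn1.
Qed.

Lemma NS_off a b : a != b -> submxblock NS a b = 'X *: submxblock KS a b.
Proof.
move=> ab; apply: drop_off => x y.
have := congr1 (fun M : 'M[C]_N => M (tagnat.Rank a x) (tagnat.Rank b y)) ev0_NS.
by rewrite /= mxE Jc_off_entry // -ev0E.
Qed.

Lemma KS0_off a b : a != b ->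
  submxblock (map_mx ev0 KS) a b = 2%:R *: submxblock (commmx X Jc) a b.
Proof.
move=> ab; apply/matrixP => x y.
transitivity ((map_mx (@c1f C) NS) (tagnat.Rank a x) (tagnat.Rank b y)).
  by rewrite !mxE ev0E coef_drop_poly.
rewrite c1_NS mxE [(_ *: Jc) _ _]mxE Jc_off_entry // mulr0 addr0.
by rewrite /commmx !mxE.
Qed.

Lemma evt_a (t : C) : map_mx (horner_eval t) aS = 1%:M - t *: X.
Proof. by rewrite /aS map_mxB map_mx1 map_mxZ evtC /= ?horner_evalE hornerX. Qed.

Lemma evt_NS (t : C) : map_mx (horner_eval t) NS =
  (1%:M + t *: X) *m \adj (1%:M - t *: X) *m Jc *m \adj (1%:M + t *: X) *m (1%:M - t *: X).
Proof.
have Ea : map_mx (horner_eval t) aS = 1%:M - t *: X.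
  by rewrite /aS map_mxB map_mx1 map_mxZ evtC /= ?horner_evalE hornerX.
have Eb : map_mx (horner_eval t) bS = 1%:M + t *: X.
  by rewrite /bS map_mxD map_mx1 map_mxZ evtC /= ?horner_evalE hornerX.
by rewrite /NS !map_mxM !map_mx_adj Ea Eb evtC.
Qed.
End Main.
Lemma comm_1pm (C : comNzRingType) n (Y : 'M[C]_n) :
  (1%:M - Y) *m (1%:M + Y) = (1%:M + Y) *m (1%:M - Y).
Proof.
rewrite !(mulmxBl, mulmxDl, mulmxDr, mulmxBr, mul1mx, mulmx1).
rewrite mulmxN mulNmx; move: (Y *m Y) => YY.
by rewrite !addrA addrK subrK.
Qed.

Lemma exists_nonroot (C : numDomainType) (p : {poly C}) : p != 0 ->
  exists t0 : nat, p.[t0%:R] != 0.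
Proof.
move=> p0; case: (boolP [forall i : 'I_(size p), root p i%:R]) => [H|].
  set rs := [seq ((val i)%:R : C) | i <- enum 'I_(size p)].
  have /negP[] : ~~ (size rs < size p)%N by rewrite size_map size_enum_ord ltnn.
  apply: max_poly_roots p0 _ _.
    by apply/allP => x /mapP [i _ ->]; exact: (forallP H i).
  rewrite map_inj_uniq ?enum_uniq // => x y /eqP; rewrite eqr_nat => /eqP.
  exact: val_inj.
by case/forallPn => i Hi; exists i.
Qed.

Theorem lemma6p3 (R : realType) (k : nat) (ns : 'I_k -> nat)
  (ns_pos : forall i, (0 < ns i)%N)
  (Js : forall i : 'I_k, 'M[R]_(ns i))
  (X : 'M[R[i]]_(\sum_(i < k) ns i))
  (HX : skew_hermitian X)
  (i0 : 'I_k) (s : seq 'I_k)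
  (Hl : (0 < size s)%N)
  (Hpath : path (fun a b : 'I_k => a != b) i0 (rcons s i0))
  (Hnr : ~~ (char_poly
              (Acyc (commmx X (map_mx (real_complex R) (\mxdiag_(i < k) Js i))) i0 s)
              \is a polyOver Num.real)) :
  ~ (forall g : 'M[R[i]]_(\sum_(i < k) ns i), unitary_mx g ->
       exists l o h : 'M[R[i]]_(\sum_(i < k) ns i),
         [/\ (unitary_mx l /\ forall i j : 'I_k, i != j -> submxblock l i j = 0),
             (unitary_mx o /\ o \is a mxOver Num.real),
             (unitary_mx h /\
                h *m map_mx (real_complex R) (\mxdiag_(i < k) Js i)
                = map_mx (real_complex R) (\mxdiag_(i < k) Js i) *m h)
           & g = l *m o *m h]).
Proof.
move=> Hsurj.
have JcE : map_mx (real_complex R) (\mxdiag_(i < k) Js i) = Jc Js by [].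
rewrite JcE Acyc_G in Hnr; rewrite JcE in Hsurj.
set m := ns i0 in Hnr *.
set L := (size s).+1.
set M0 := AcycG Num.conj (commmx X (Jc Js)) i0 s in Hnr.
have : [exists j : 'I_m.+1, (char_poly M0)`_j \notin Num.real].
  apply: contraNT Hnr => /existsPn H; apply/polyOverP => i.
  case: (ltnP i m.+1) => [lt|ge]; first by have := H (Ordinal lt); rewrite negbK.
  by rewrite nth_default ?rpred0 // size_char_poly.
case/existsP => j Hj.
have jm : (j <= m)%N by rewrite -ltnS.
set e := (char_poly M0)`_j in Hj.
set AS := AcycG (map_poly (@Num.conj R[i])) (NS Js X) i0 s.
set BS := AcycG (map_poly (@Num.conj R[i])) (KS Js X) i0 s.
have HAS : AS = 'X ^+ L *: BS.
  apply: AcycG_scale => //; first exact: map_polyX.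
  exact: NS_off.
set r := (char_poly BS)`_j.
have Hq : (char_poly AS)`_j = ('X ^+ L) ^+ (m - j) * r.
  by rewrite HAS char_poly_scale // expf_neq0 // polyX_eq0.
have HBS0 : map_mx (horner_eval 0) BS = (2%:R : R[i]) ^+ L *: M0.
  rewrite /BS (map_AcycG (f' := Num.conj)); last first.
    by move=> p; rewrite /= !horner_evalE -[in LHS]conjC0 horner_map.
  rewrite /M0; apply: AcycG_scale => //; first exact: rmorph_nat.
  exact: KS0_off.
have two0 : (2%:R : R[i]) ^+ L != 0 by rewrite expf_neq0 // pnatr_eq0.
have r0 : r.[0] = ((2%:R : R[i]) ^+ L) ^+ (m - j) * e.
  have -> : r.[0] = (char_poly (map_mx (horner_eval 0) BS))`_j.
    by rewrite -map_char_poly coef_map.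
  by rewrite HBS0 char_poly_scale.
have rnr : r.[0] \notin Num.real.
  apply: contra Hj => H.
  have c0 : ((2%:R : R[i]) ^+ L) ^+ (m - j) != 0 by rewrite expf_neq0.
  rewrite /e -(mulKf c0 (char_poly M0)`_j) -/e -r0.
  by rewrite rpredM // rpredV rpredX // rpredX // realn.
set rho := map_poly (@Num.conj R[i]) r - r.
have rho0 : rho.[0] != 0.
  rewrite /rho hornerD hornerN -[in X in X - _]conjC0 horner_map subr_eq0.
  by rewrite -CrealE.
have da0 : (\det (aS X)).[0] != 0.
  by rewrite -horner_evalE -det_map_mx /= ev0_a det1 oner_neq0.
have pi0 : 'X * rho * \det (aS X) != 0.
  rewrite !mulf_neq0 ?polyX_eq0 //.
    by apply: contraNneq rho0 => ->; rewrite horner0.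
  by apply: contraNneq da0 => ->; rewrite horner0.
have [t0 Ht0] := exists_nonroot pi0.
set t : R[i] := t0%:R in Ht0.
rewrite !hornerM hornerX !mulf_eq0 !negb_or -andbA in Ht0.
case/and3P: Ht0 => t_0 rhot dat.
have conjt : t^* = t by rewrite /t rmorph_nat.
set a := 1%:M - t *: X.
set b := 1%:M + t *: X.
have Hda : \det a != 0 by rewrite /a -evt_a det_map_mx.
have Hba : b = ctmx a.
  apply/matrixP => x y; have := congr1 (fun M : 'M[R[i]]_(\sum_(i < k) ns i) => M x y) HX.
  rewrite /ctmx !mxE => HXe.
  rewrite rmorphB rmorphM /= conjt HXe mulrN opprK rmorphMn rmorph1 eq_sym.
  by [].
have Hdb : \det b = (\det a)^* by rewrite Hba /ctmx det_map_mx det_tr.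
have ua : a \in unitmx by rewrite unitmxE unitfE.
have ub : b \in unitmx by rewrite unitmxE unitfE Hdb conjC_eq0.
have Hab : a *m b = b *m a := comm_1pm (t *: X).
have Hcomm : b *m invmx a = invmx a *m b.
  have := congr1 (fun M => invmx a *m M *m invmx a) Hab.
  by rewrite /= mulKmx // !mulmxA -(mulmxA _ a) mulmxV // mulmx1.
set g := b *m invmx a.
have ctb : ctmx b = a by rewrite Hba ctmxK.
have ctia : ctmx (invmx a) = invmx b by rewrite /ctmx trmx_inv map_invmx Hba.
have Hctg : ctmx g = invmx b *m a by rewrite /g ctmxM ctia ctb.
have gu : unitary_mx g.
  rewrite /unitary_mx Hctg /g Hcomm.
  by rewrite mulmxA -(mulmxA _ b) mulmxV // mulmx1 mulVmx.
have [l [o [h [[Hlu Hoff] [Hou Hor] [Hhu HhJ] Hg]]]] := Hsurj g gu.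
set P := g *m Jc Js *m ctmx g.
have HPl : P = l *m (o *m Jc Js *m ctmx o) *m ctmx l.
  rewrite /P Hg !ctmxM -!mulmxA (mulmxA h (Jc Js)) HhJ -mulmxA (mulmxA h) Hhu.
  by rewrite mul1mx.
have Jreal : Jc Js \is a mxOver Num.real.
  by apply/mxOverP => x y; rewrite mxE; apply/complex_realP; eexists.
have Qreal : o *m Jc Js *m ctmx o \is a mxOver Num.real.
  apply: mxOverM; first by apply: mxOverM.
  move/mxOverP: Hor => Hor; apply/mxOverP => x y; rewrite mxE.
  by rewrite mxE conj_Creal.
have HPreal := decomp_real i0 s Hlu Hoff Qreal.
rewrite -HPl in HPreal.
set dd := (\det a)^-1 * (\det b)^-1.
have HPN : P = dd *: map_mx (horner_eval t) (NS Js X).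
  rewrite evt_NS -/a -/b /P Hctg /g /invmx ua ub.
  rewrite -!scalemxAl -?scalemxAr -?scalemxAl -?scalemxAr -?scalemxAl scalerA.
  by rewrite !mulmxA [X in X *: _ = _]mulrC.
have dd0 : dd != 0 by rewrite mulf_neq0 // invr_eq0 // -unitfE -unitmxE.
have ddr : dd \is Num.real.
  by rewrite CrealE /dd rmorphM !fmorphV /= Hdb conjCK mulrC.
have HPs : AcycG Num.conj P i0 s =
    dd ^+ L *: AcycG Num.conj (map_mx (horner_eval t) (NS Js X)) i0 s.
  rewrite HPN; apply: AcycG_scale => //; first by rewrite /= conj_Creal.
  by move=> a' b' _; apply/matrixP => x y; rewrite !mxE.
have := polyOverP HPreal j.
rewrite HPs char_poly_scale ?expf_neq0 //.
rewrite -(map_AcycG (phi := horner_eval t) (f := map_poly Num.conj) (f' := Num.conj)); last first.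
  by move=> p; rewrite /= !horner_evalE -[in LHS]conjt horner_map.
rewrite -map_char_poly coef_map -/AS Hq /= horner_evalE hornerM !horner_exp hornerX.
move=> Hre.
have c0 : (dd ^+ L) ^+ (m - j) * (t ^+ L) ^+ (m - j) != 0.
  by rewrite mulf_neq0 // !expf_neq0.
have rtr : r.[t] \is Num.real.
  have E : (dd ^+ L) ^+ (m - j) * (t ^+ L) ^+ (m - j) * r.[t] \is Num.real.
    by rewrite -mulrA.
  have tr : t \is Num.real by rewrite /t realn.
  by rewrite -(mulKf c0 r.[t]) rpredM // rpredV rpredM // rpredX // rpredX.
move: rhot; rewrite /rho hornerD hornerN -[in X in X - _]conjt horner_map.
by rewrite /= conj_Creal // subrr eqxx.
Qed.
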